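(* Let $n\ge 4$ and $Q=\{0,\dots,n-1\}$. Then $\mathbf{W}_{\mathrm{sf}}(n)$ is the unique maximal semigroup of a suffix-free language in which no two states from $\{1,\dots,n-2\}$ are colliding; that is, $\mathbf{W}_{\mathrm{sf}}(n)$ is the transition semigroup of a minimal DFA (with state set $Q$, initial state $0$, empty state $n-1$) accepting a suffix-free language, no two states of $\{1,\dots,n-2\}$ collide in it, and every transition semigroup $T$ of such a DFA in which no two states of $\{1,\dots,n-2\}$ collide satisfies $T\subseteq\mathbf{W}_{\mathrm{sf}}(n)$.
   Context: A language $L$ is suffix-free if whenever $w\in L$ and $u\in L$ with $u$ a suffix of $w$, then $u=w$. Transformations act on the right ($qt$ is the image of $q$ under $t$). The transition semigroup of a DFA is the semigroup of transformations of its state set generated by the transformations induced by its letters. A minimal complete DFA of a suffix-free language with $n\ge2$ states has exactly one empty state (a state from which no final state is reachable); the states are labeled $Q=\{0,\dots,n-1\}$ with $0$ initial and $n-1$ empty. For a semigroup $T$ of transformations of $Q$, an unordered pair $\{p,q\}$ of distinct states of $Q\setminus\{0,n-1\}$ is colliding in $T$ if there exist $t\in T$ and $r\in Q\setminus\{0,n-1\}$ with $0t=p$ and $rt=q$. Define $\mathbf{B}_{\mathrm{sf}}(n)=\{t:Q\to Q \mid 0\notin Qt,\ (n-1)t=n-1,\ \text{and for all } j\ge1:\ 0t^j=n-1 \text{ or } 0t^j\neq qt^j \text{ for all } 0<q<n-1\}$ and $\mathbf{W}_{\mathrm{sf}}(n)=\{t\in\mathbf{B}_{\mathrm{sf}}(n)\mid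 0t=n-1 \text{ or } qt=n-1 \text{ for all } 1\le q\le n-2\}$. *)

(* Defs.v *)
(* States Q = {0,...,n-1} are the ordinals 'I_n;
   state 0 is the one with value 0, the empty state the one with value n-1. *)
From mathcomp Require Import all_boot.
Set Implicit Arguments.
Unset Strict Implicit.
Unset Printing Implicit Defensive.

Section Defs.
Variable n : nat.
Notation Q := 'I_n.
Notation trans := {ffun Q -> Q}.

Definition is_init (q : Q) : bool := val q == 0.
Definition is_empty_st (q : Q) : bool := val q == n.-1.
Definition is_mid (q : Q) : bool := (0 < val q) && (val q < n.-1).

Definition tpow (t : trans) (j : nat) (q : Q) : Q := iter j t q.

Definition Bsf (t : trans) : Prop :=
  (forall q : Q, ~~ is_init (t q)) /\
  (forall e : Q, is_empty_st e -> t e = e) /\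
  (forall (j : nat) (z : Q), 1 <= j -> is_init z ->
     is_empty_st (tpow t j z) \/
     (forall q : Q, is_mid q -> tpow t j z <> tpow t j q)).

Definition Wsf (t : trans) : Prop :=
  Bsf t /\
  (forall z : Q, is_init z ->
     is_empty_st (t z) \/ (forall q : Q, is_mid q -> is_empty_st (t q))).

Definition colliding (T : trans -> Prop) (p q : Q) : Prop :=
  [/\ is_mid p, is_mid q, p <> q &
    exists t (z r : Q), [/\ T t, is_init z, is_mid r &
      ((t z = p /\ t r = q) \/ (t z = q /\ t r = p))]].

Definition no_colliding (T : trans -> Prop) : Prop :=
  forall p q : Q, ~ colliding T p q.

Variable Sigma : finType.
Variable delta : Sigma -> trans.
Variable F : {set Q}.

Definition run (q : Q) (w : seq Sigma) : Q := foldl (fun s a => delta a s) q w.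

Definition word_trans (w : seq Sigma) : trans := [ffun q => run q w].

(* transition semigroup: transformations induced by nonempty words
   (the semigroup generated by the letter transformations) *)
Definition trans_sg (t : trans) : Prop :=
  exists w : seq Sigma, w <> [::] /\ t = word_trans w.

Definition accepts (w : seq Sigma) : Prop :=
  exists z : Q, is_init z /\ run z w \in F.

Definition suffix_free : Prop :=
  forall w u : seq Sigma, accepts w -> accepts u ->
    (exists v, w = v ++ u) -> u = w.

Definition minimal_dfa : Prop :=
  (forall q : Q, exists z w, is_init z /\ run z w = q) /\
  (forall p q : Q, p <> q -> exists w, (run p w \in F) <> (run q w \in F)).

Definition last_is_empty : Prop :=
  forall e : Q, is_empty_st e -> forall w, run e w \notin F.

Definition sf_min_dfa : Prop := [/\ minimal_dfa, suffix_free & last_is_empty].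

End Defs.

(* Main.v *)
Require Import Defs.
From mathcomp Require Import all_boot.
From mathcomp Require Import zify.
Set Implicit Arguments.
Unset Strict Implicit.

Definition Wb n (t : {ffun 'I_n -> 'I_n}) : bool :=
  [&& [forall q, ~~ is_init (t q)],
      [forall q, is_empty_st q ==> (t q == q)] &
      [forall z, is_init z ==> is_empty_st (t z) || [forall q, is_mid q ==> is_empty_st (t q)]]].

Lemma empty_eq n (p q : 'I_n) : is_empty_st p -> is_empty_st q -> p = q.
Proof. rewrite /is_empty_st => /eqP h1 /eqP h2; apply: val_inj; by rewrite /= h1 h2. Qed.

Lemma init_eq n (p q : 'I_n) : is_init p -> is_init q -> p = q.
Proof. rewrite /is_init => /eqP h1 /eqP h2; apply: val_inj; by rewrite /= h1 h2. Qed.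

Lemma mid_not_empty n (q : 'I_n) : is_mid q -> ~~ is_empty_st q.
Proof. rewrite /is_mid /is_empty_st => /andP [_ h]; apply/eqP => e; lia. Qed.

Lemma notinit_notempty_mid n (q : 'I_n) : ~~ is_init q -> ~~ is_empty_st q -> is_mid q.
Proof. rewrite /is_mid /is_empty_st /is_init => /eqP h1 /eqP h2. have h := ltn_ord q. apply/andP; split; rewrite ?lt0n; [exact/eqP|]. case: n q h1 h2 h => [|m] q //= h1 h2 h. lia. Qed.

Lemma Wb_Wsf n (t : {ffun 'I_n -> 'I_n}) : Wb t -> Wsf t.
Proof.
case/and3P => /forallP h1 /forallP h2 /forallP h3.
have fixe : forall q, is_empty_st q -> t q = q by move=> q hq; apply/eqP; exact: (implyP (h2 q)).
have powe : forall j q, is_empty_st q -> tpow t j q = q.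
  move=> j q hq; rewrite /tpow; elim: j => //= j ->; exact: fixe.
have powe1 : forall j q, 1 <= j -> is_empty_st (t q) -> is_empty_st (tpow t j q).
  move=> [|j] // q _ hq; have := powe j _ hq; rewrite /tpow iterSr => ->; done.
split; [split; [exact: h1 | split; [exact: fixe |]] |].
  move=> j z hj hz; case/orP: (implyP (h3 z) hz) => [he|/forallP hall].
    by left; exact: powe1.
  case he: (is_empty_st (tpow t j z)); [by left | right].
  move=> q hq eq; have := powe1 j q hj (implyP (hall q) hq).
  by rewrite -eq he.
move=> z hz; case/orP: (implyP (h3 z) hz) => [he|/forallP hall]; [by left | right].
by move=> q hq; exact: (implyP (hall q) hq).
Qed.

Lemma Wsf_Wb n (t : {ffun 'I_n -> 'I_n}) : Wsf t -> Wb t.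
Proof.
move=> [[h1 [h2 _]] h3]; apply/and3P; split.
- by apply/forallP.
- by apply/forallP => q; apply/implyP => hq; rewrite h2.
- apply/forallP => z; apply/implyP => hz; case: (h3 z hz) => [->//|h]; apply/orP; right.
  by apply/forallP => q; apply/implyP => hq; exact: h.
Qed.

Lemma Wb_comp n (t1 t2 : {ffun 'I_n -> 'I_n}) : Wb t1 -> Wb t2 -> Wb [ffun q => t2 (t1 q)].
Proof.
case/and3P => /forallP a1 /forallP a2 /forallP a3.
case/and3P => /forallP b1 /forallP b2 /forallP b3.
have fix2 : forall q, is_empty_st q -> t2 q = q by move=> q hq; apply/eqP; exact: (implyP (b2 q)).
apply/and3P; split.
- by apply/forallP => q; rewrite ffunE.
- apply/forallP => q; apply/implyP => hq; rewrite ffunE.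
  by rewrite (eqP (implyP (a2 q) hq)) fix2.
- apply/forallP => z; apply/implyP => hz; rewrite ffunE.
  case/orP: (implyP (a3 z) hz) => [he|/forallP hall].
    by rewrite fix2 // he.
  apply/orP; right; apply/forallP => q; apply/implyP => hq; rewrite ffunE.
  by have he := implyP (hall q) hq; rewrite fix2.
Qed.

Lemma word_trans_cons n (Sigma : finType) (delta : Sigma -> {ffun 'I_n -> 'I_n}) a w :
  word_trans delta (a :: w) = [ffun q => word_trans delta w (delta a q)].
Proof. by apply/ffunP => q; rewrite !ffunE. Qed.

Lemma word_trans1 n (Sigma : finType) (delta : Sigma -> {ffun 'I_n -> 'I_n}) a :
  word_trans delta [:: a] = delta a.
Proof. by apply/ffunP => q; rewrite !ffunE. Qed.

Lemma Wb_word n (Sigma : finType) (delta : Sigma -> {ffun 'I_n -> 'I_n}) :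
  (forall a, Wb (delta a)) -> forall w, w <> [::] -> Wb (word_trans delta w).
Proof.
move=> hd; elim=> [//|a w IH] _.
case: w IH => [|b w] IH; first by rewrite word_trans1.
rewrite word_trans_cons; apply: Wb_comp => //; exact: IH.
Qed.

Lemma run_cat n (Sigma : finType) (delta : Sigma -> {ffun 'I_n -> 'I_n}) q u v :
  run delta q (u ++ v) = run delta (run delta q u) v.
Proof. by rewrite /run foldl_cat. Qed.

Section P2.
Variables (n : nat) (Sigma : finType) (delta : Sigma -> {ffun 'I_n -> 'I_n}) (F : {set 'I_n}).
Hypothesis Hn : 4 <= n.
Hypothesis HD : sf_min_dfa delta F.

Lemma empty_stuck e : is_empty_st e -> forall w, run delta e w = e.
Proof.
case: HD => [[_ hmin] _ hle] he w; apply/eqP/negPn/negP => hne.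
have [w' hw'] := hmin _ _ (elimN eqP hne).
apply: hw'; rewrite -run_cat; by rewrite (negbTE (hle e he _)) (negbTE (hle e he w')).
Qed.

Lemma live s : ~~ is_empty_st s -> exists x, run delta s x \in F.
Proof.
case: HD => [[_ hmin] _ hle] hs.
have ep : n.-1 < n by rewrite prednK ?ltnSn //; lia.
pose e := Ordinal ep.
have he : is_empty_st e by rewrite /is_empty_st eqxx.
have sne : s <> e by move=> eq; move: hs; rewrite eq he.
have [w hw] := hmin _ _ sne; exists w.
by move: hw; rewrite (negbTE (hle e he w)); case: (run delta s w \in F).
Qed.

Lemma reach z q : is_init z -> exists u, run delta z u = q.
Proof.
case: HD => [[hr _] _ _] hz; have [z' [u [hz' <-]]] := hr q.
by exists u; rewrite (init_eq hz hz').
Qed.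

Lemma init_not_empty (z : 'I_n) : is_init z -> ~~ is_empty_st z.
Proof. rewrite /is_init /is_empty_st => /eqP ->; apply/eqP; lia. Qed.

Lemma noinit w q : w <> [::] -> ~~ is_init (run delta q w).
Proof.
case: HD => [_ hsf _] hw; apply/negP => hi.
have ep : 0 < n by lia.
pose z := Ordinal ep.
have hz : is_init z by [].
have [u hu] := reach q hz.
have [x hx] := live (init_not_empty hz).
have acc1 : accepts delta F x by exists z.
have acc2 : accepts delta F ((u ++ w) ++ x).
  by exists z; split => //; rewrite run_cat run_cat hu (init_eq hi hz).
have := hsf _ _ acc2 acc1 (ex_intro _ (u ++ w) erefl).
have sw : 0 < size w by case: (w) hw.
move/(congr1 size); rewrite !size_cat; lia.
Qed.

Lemma dist w z q : w <> [::] -> is_init z -> ~~ is_init q ->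
  ~~ is_empty_st (run delta z w) -> run delta z w <> run delta q w.
Proof.
case: HD => [_ hsf _] hw hz hq hs eq.
have [u hu] := reach q hz.
have hu0 : u <> [::] by move=> h; move: hq; rewrite -hu h /= hz.
have [x hx] := live hs.
have acc1 : accepts delta F (w ++ x) by exists z; rewrite run_cat.
have acc2 : accepts delta F (u ++ (w ++ x)).
  by exists z; split => //; rewrite run_cat run_cat hu -eq.
have := hsf _ _ acc2 acc1 (ex_intro _ u erefl).
have sw : 0 < size u by case: (u) hu0.
move/(congr1 size); rewrite !size_cat; lia.
Qed.

End P2.

Lemma part2 n (Hn : 4 <= n) (Sigma : finType) (delta : Sigma -> {ffun 'I_n -> 'I_n}) (F : {set 'I_n}) :
     sf_min_dfa delta F -> no_colliding (trans_sg delta) ->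
     forall t, trans_sg delta t -> Wsf t.
Proof.
move=> HD hnc t ht; apply: Wb_Wsf.
case: (ht) => w [hw ->].
have ev q : word_trans delta w q = run delta q w by rewrite ffunE.
apply/and3P; split.
- by apply/forallP => q; rewrite ev; exact: (noinit Hn HD).
- apply/forallP => q; apply/implyP => hq; by rewrite ev (empty_stuck HD hq).
- apply/forallP => z; apply/implyP => hz; rewrite ev.
  case hez: (is_empty_st (run delta z w)) => //=.
  apply/forallP => q; apply/implyP => hq; rewrite ev.
  case heq: (is_empty_st (run delta q w)) => //; exfalso.
  apply: (hnc (run delta z w) (run delta q w)); split.
  + apply: notinit_notempty_mid; [exact: (noinit Hn HD) | by rewrite hez].
  + apply: notinit_notempty_mid; [exact: (noinit Hn HD) | by rewrite heq].
  + apply: (dist Hn HD hw hz); [by move: hq => /andP [h _]; rewrite /is_init -lt0n | by rewrite hez].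
  + exists (word_trans delta w), z, q; split => //; [by exists w | by left; rewrite !ev].
Qed.

Section P1.
Variable m : nat.
Hypothesis Hm : 3 <= m.
Notation Q := 'I_m.+1.
Definition e : Q := ord_max.
Definition one : Q := inord 1.
Lemma val_one : val one = 1. Proof. rewrite /one /= inordK //; lia. Qed.
Definition pm (x y : Q) : {ffun Q -> Q} := [ffun q => if q == x then y else e].

Lemma empty_e (q : Q) : is_empty_st q = (q == e).
Proof. by rewrite /is_empty_st /=; apply/eqP/eqP => [h|->//]; apply: val_inj. Qed.

Lemma Wb_pm x y : val y != 0 -> x != e -> Wb (pm x y).
Proof.
move=> hy hx; apply/and3P; split.
- apply/forallP => q; rewrite ffunE /is_init; case: ifP => //= _; lia.
- apply/forallP => q; apply/implyP; rewrite empty_e => /eqP ->; rewrite ffunE.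
  by rewrite (eq_sym e x) (negbTE hx).
- apply/forallP => z; apply/implyP => hz; rewrite ffunE.
  case: ifP => [/eqP hzx|_]; last by rewrite empty_e eqxx.
  apply/orP; right; apply/forallP => q; apply/implyP => hq; rewrite ffunE.
  case: ifP => [/eqP hqx|_]; last by rewrite empty_e eqxx.
  by move: hq hz; rewrite hqx -hzx /is_mid /is_init => /andP [h _] /eqP h'; lia.
Qed.

Definition cst : {ffun Q -> Q} := pm ord0 e.
Lemma Wb_cst : Wb cst.
Proof. apply: Wb_pm => //=; [lia | apply/eqP => h; move: (congr1 val h) => /=; lia]. Qed.

Definition dl (a : {ffun Q -> Q}) : {ffun Q -> Q} := if Wb a then a else cst.
Lemma Wb_dl a : Wb (dl a).
Proof. rewrite /dl; case: ifP => // _; exact: Wb_cst. Qed.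
Definition FF : {set Q} := [set one].

Lemma e_fix w : run dl e w = e.
Proof.
elim: w => [//|a w IH].
have hf : dl a e = e.
  have /and3P [_ /forallP h _] := Wb_dl a.
  by apply/eqP; apply: (implyP (h e)); rewrite empty_e.
by rewrite /run /= hf; exact: IH.
Qed.

Lemma e_notF : e \notin FF.
Proof. rewrite /FF in_set1; apply/eqP => h; move: (congr1 val h); rewrite val_one /=; lia. Qed.

Lemma part1 : [/\ sf_min_dfa dl FF,
         (forall t, trans_sg dl t <-> Wsf t) &
         no_colliding (trans_sg dl)].
Proof.
have hW := Wb_word Wb_dl.
have ev w q : word_trans dl w q = run dl q w by rewrite ffunE.
split.
- split.
  + split.
    * move=> q; case h0: (val q == 0).
        by exists q, [::].
      exists ord0, [:: pm ord0 q]; split => //.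
      rewrite /run /= /dl Wb_pm ?ffunE ?eqxx //; first by rewrite h0.
      by apply/eqP => h; move: (congr1 val h) => /=; lia.
    * move=> p q hpq.
      pose x := if p == e then q else p.
      have hx : x != e.
        rewrite /x; case: ifP => hp; last by rewrite hp.
        by apply/eqP => hq; apply: hpq; rewrite (eqP hp) hq.
      have hone : val one != 0 by rewrite val_one.
      have rx : run dl x [:: pm x one] = one by rewrite /run /= /dl Wb_pm // ffunE eqxx.
      have ry y : y != x -> run dl y [:: pm x one] = e by move=> hy; rewrite /run /= /dl Wb_pm // ffunE (negbTE hy).
      exists [:: pm x one].
      have FO : one \in FF by rewrite in_set1.
      case hp: (p == e).
        have xq : x = q by rewrite /x hp.
        rewrite -xq rx ry ?FO ?(negbTE e_notF) //.
        by rewrite xq; apply/eqP => h; apply: hpq.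
      have xp : x = p by rewrite /x hp.
      rewrite -xp rx ry ?FO ?(negbTE e_notF) //.
      by rewrite xp; apply/eqP => h; apply: hpq.
  + move=> w u [z [hz hwF]] [z' [hz' huF]] [v hv].
    case: v hv => [-> //|a v] hv; exfalso.
    have hvn : (a :: v) <> [::] by [].
    move: hwF; rewrite hv run_cat; set s := run dl z (a :: v).
    have /and3P [/forallP h1 /forallP h2 /forallP h3] := hW _ hvn.
    have hs : ~~ is_init s by have := h1 z; rewrite ev.
    have hu : u <> [::] by move=> hu; move: huF; rewrite hu /= in_set1 => /eqP hh;
        move: hz' (congr1 val hh); rewrite val_one /is_init => /eqP ->.
    have /and3P [/forallP g1 /forallP g2 /forallP g3] := hW _ hu.
    move: (implyP (g3 z') hz'); rewrite ev.
    move: huF; rewrite in_set1 => /eqP ->.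
    rewrite empty_e; have -> : (one == e) = false.
      by apply/eqP => h; move: (congr1 val h); rewrite val_one /=; lia.
    move=> /= /forallP hall.
    rewrite in_set1 => /eqP hsu.
    case hse: (is_empty_st s).
      have := implyP (g2 s) hse; rewrite ev hsu => /eqP hh.
      by move: hse; rewrite -hh empty_e; move/eqP/(congr1 val); rewrite val_one /=; lia.
    have := implyP (hall s) (notinit_notempty_mid hs (negbT hse)).
    rewrite ev hsu empty_e => /eqP/(congr1 val); rewrite val_one /=; lia.
  + move=> q hq w; rewrite (empty_eq hq (_ : is_empty_st e)) ?e_fix ?e_notF //.
    by rewrite empty_e.
- move=> t; split.
    by case=> w [hw ->]; apply: Wb_Wsf; exact: hW.
  move=> ht; exists [:: t]; split => //; rewrite word_trans1 /dl.
  by rewrite (Wsf_Wb ht).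
- move=> p q [hp hq _ [t [z [r [[w [hw ht]] hz hr hor]]]]].
  have /and3P [_ _ /forallP h3] := hW _ hw.
  rewrite -ht in h3.
  case/orP: (implyP (h3 z) hz) => [he|/forallP hall].
    by case: hor => [[h _]|[h _]]; move: he; rewrite h; apply/negP; exact: mid_not_empty.
  have := implyP (hall r) hr.
  by case: hor => [[_ h]|[_ h]]; rewrite h; apply/negP; exact: mid_not_empty.
Qed.
End P1.

Theorem proposition3 (n : nat) (Hn : 4 <= n) :
  (exists (Sigma : finType) (delta : Sigma -> {ffun 'I_n -> 'I_n}) (F : {set 'I_n}),
     [/\ sf_min_dfa delta F,
         (forall t, trans_sg delta t <-> Wsf t) &
         no_colliding (trans_sg delta)]) /\
  (forall (Sigma : finType) (delta : Sigma -> {ffun 'I_n -> 'I_n}) (F : {set 'I_n}),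
     sf_min_dfa delta F -> no_colliding (trans_sg delta) ->
     forall t, trans_sg delta t -> Wsf t).
Proof.
split; last exact: part2.
case: n Hn => [//|m] Hm.
have Hm3 : 3 <= m by [].
exists {ffun 'I_m.+1 -> 'I_m.+1}, (@dl m), (FF m).
exact: part1.
Qed.
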